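(* Let $X$ be a finite connected poset, $\theta\in\mathcal{M}(X)$, and let $C:x_1<\dots<x_n$ and $D:y_1<\dots<y_m$ be maximal chains of $X$. Assume $x_i=y_j$ for some $1<i<n$ and $1<j<m$. If $\theta$ is increasing (resp. decreasing) on $C$, then it is increasing (resp. decreasing) on $D$. Moreover, if $\theta(C):u_1<\dots<u_n$ and $\theta(D):v_1<\dots<v_m$, then $u_i=v_j$ (resp. $u_{n-i+1}=v_{m-j+1}$).
   Context: For $x<y$, $e_{xy}$ denotes the incidence-algebra basis element and $B=\{e_{xy}:x<y\}$. For a bijection $\theta:B\to B$ and a maximal chain $C:u_1<\dots<u_k$, $\theta$ is increasing on $C$ if there is a maximal chain $D':v_1<\dots<v_k$ with $\theta(e_{u_pu_q})=e_{v_pv_q}$ for all $p<q$, and decreasing if there is such $D'$ with $\theta(e_{u_pu_q})=e_{v_{k-q+1}v_{k-p+1}}$ for all $p<q$; in either case $\theta(C)$ denotes $D'$. $\mathcal{M}(X)$ is the set of bijections $B\to B$ increasing or decreasing on every maximal chain. *)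

(* Defs.v *)
From HB Require Import structures.
From mathcomp Require Import all_boot all_order.
Set Implicit Arguments. Unset Strict Implicit. Unset Printing Implicit Defensive.
Import Order.TTheory.
Local Open Scope order_scope.

Section Defs.
Context {disp : Order.disp_t} {X : finPOrderType disp}.

(** The basis B = { e_xy : x < y } of the incidence algebra, as a finite type. *)
Definition Bt := {p : X * X | p.1 < p.2}.

Definition poset_connected := forall x y : X, connect (fun a b : X => a >=< b) x y.

Definition is_chain (s : seq X) := sorted <%O s.

Definition max_chain (s : seq X) :=
  is_chain s /\ forall t, is_chain t -> {subset s <= t} -> {subset t <= s}.

Definition incr_with (theta : Bt -> Bt) (C : seq X) (D : (size C).-tuple X) :=
  max_chain D /\
  forall (p q : 'I_(size C)) (b : Bt), (p < q)%N ->
    val b = (tnth (in_tuple C) p, tnth (in_tuple C) q) ->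
    val (theta b) = (tnth D p, tnth D q).

Definition decr_with (theta : Bt -> Bt) (C : seq X) (D : (size C).-tuple X) :=
  max_chain D /\
  forall (p q : 'I_(size C)) (b : Bt), (p < q)%N ->
    val b = (tnth (in_tuple C) p, tnth (in_tuple C) q) ->
    val (theta b) = (tnth D (rev_ord q), tnth D (rev_ord p)).

Definition increasing_on theta C := exists D, @incr_with theta C D.
Definition decreasing_on theta C := exists D, @decr_with theta C D.

Definition in_M (theta : Bt -> Bt) :=
  bijective theta /\
  forall C, max_chain C -> increasing_on theta C \/ decreasing_on theta C.

End Defs.

(* Main.v *)
Require Import Defs.
From mathcomp Require Import all_boot all_order.
From Stdlib Require Import Classical_Prop.
From mathcomp Require Import zify.
Set Implicit Arguments. Unset Strict Implicit. Unset Printing Implicit Defensive.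
Import Order.TTheory.

Section H.
Context {disp : Order.disp_t} {X : finPOrderType disp}.
Implicit Types (K s t : seq X).

Lemma nth_lt K x0 p q : is_chain K -> (p < q)%N -> (q < size K)%N ->
  (nth x0 K p < nth x0 K q)%O.
Proof.
move=> HK pq qs; rewrite (lt_sorted_ltn_nth x0 HK) //; rewrite inE.
exact: ltn_trans pq qs.
Qed.

Lemma index_lt K x y : is_chain K -> x \in K -> y \in K -> (x < y)%O ->
  (index x K < index y K)%N.
Proof.
move=> HK xK yK xy.
have := lt_sorted_ltn_nth x HK; move=> /(_ (index x K) (index y K)).
rewrite !inE !index_mem !nth_index // => H; by rewrite -H.
Qed.

Lemma chain_ext_ind k t : (#|X| - size t <= k)%N -> is_chain t ->
  exists K, max_chain K /\ {subset t <= K}.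
Proof.
elim: k t => [|k IH] t Hk Ht.
  exists t; split => //; split => // t' Ht' sub.
  have U := uniq_min_size (lt_sorted_uniq Ht) sub.
  have h0 : (size t' <= size t)%N.
    have := max_card (mem t'); rewrite (card_uniqP (lt_sorted_uniq Ht')).
    move=> h; apply: leq_trans h _; by rewrite -subn_eq0 -leqn0.
  by move=> x; rewrite -(U h0).2.
have [Hm|Hm] := Classical_Prop.classic (max_chain t).
  by exists t; split.
have [t' [Ht' [sub nsub]]] : exists t', is_chain t' /\ {subset t <= t'} /\ ~ {subset t' <= t}.
  apply: Classical_Prop.NNPP => N; apply: Hm; split => // t' Ht' sub.
  apply: Classical_Prop.NNPP => ns; apply: N; by exists t'.
have lt : (size t < size t')%N.
  rewrite ltnNge; apply/negP => le; apply: nsub.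
  have U := uniq_min_size (lt_sorted_uniq Ht) sub le.
  by move=> x; rewrite -U.2.
have hb : (#|X| - size t' <= k)%N by lia.
have [K [HK sK]] := IH t' hb Ht'.
by exists K; split => // x /sub /sK.
Qed.

Lemma incr_img theta K (W : (size K).-tuple X) x0 x y (b : Bt (X:=X)) :
  incr_with theta W -> is_chain K -> x \in K -> y \in K -> (x < y)%O ->
  val b = (x, y) ->
  val (theta b) = (nth x0 W (index x K), nth x0 W (index y K)).
Proof.
case=> _ H HK xK yK xy eb.
have ix : (index x K < size K)%N by rewrite index_mem.
have iy : (index y K < size K)%N by rewrite index_mem.
have := H (Ordinal ix) (Ordinal iy) b (index_lt HK xK yK xy).
rewrite !(tnth_nth x0) /= !nth_index //; by move=> /(_ eb).
Qed.

Lemma decr_img theta K (W : (size K).-tuple X) x0 x y (b : Bt (X:=X)) :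
  decr_with theta W -> is_chain K -> x \in K -> y \in K -> (x < y)%O ->
  val b = (x, y) ->
  val (theta b) = (nth x0 W (size K - (index y K).+1),
                   nth x0 W (size K - (index x K).+1)).
Proof.
case=> _ H HK xK yK xy eb.
have ix : (index x K < size K)%N by rewrite index_mem.
have iy : (index y K < size K)%N by rewrite index_mem.
have := H (Ordinal ix) (Ordinal iy) b (index_lt HK xK yK xy).
rewrite !(tnth_nth x0) /= !nth_index //; by move=> /(_ eb).
Qed.

Lemma triple theta a z c (b1 b2 : Bt (X:=X)) : in_M theta ->
  (a < z)%O -> (z < c)%O -> val b1 = (a, z) -> val b2 = (z, c) ->
  (val (theta b1)).2 = (val (theta b2)).1 \/
  (val (theta b2)).2 = (val (theta b1)).1.
Proof.
move=> Hm az zc e1 e2.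
have Hs : is_chain [:: a; z; c] by rewrite /is_chain /= az zc.
have [K [HK sK]] := chain_ext_ind (k:=#|X|) (leq_subr _ _) Hs.
have aK : a \in K by apply: sK; rewrite !inE eqxx.
have zK : z \in K by apply: sK; rewrite !inE eqxx orbT.
have cK : c \in K by apply: sK; rewrite !inE eqxx !orbT.
case: (Hm.2 K HK) => [[W HW]|[W HW]].
  left; by rewrite (incr_img a HW HK.1 aK zK az e1) (incr_img a HW HK.1 zK cK zc e2).
right; by rewrite (decr_img a HW HK.1 aK zK az e1) (decr_img a HW HK.1 zK cK zc e2).
Qed.

Lemma le_last s x0 y : is_chain s -> y \in s -> (y <= nth x0 s (size s).-1)%O.
Proof.
move=> Hs yS.
have sz : (0 < size s)%N by case: s yS Hs.
rewrite -[y in (y <= _)%O](nth_index x0 yS) (lt_sorted_leq_nth x0 Hs) ?inE ?index_mem //.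
  by rewrite -ltnS prednK // index_mem.
by rewrite prednK.
Qed.

Lemma le_head s x0 y : is_chain s -> y \in s -> (nth x0 s 0 <= y)%O.
Proof.
move=> Hs yS.
have sz : (0 < size s)%N by case: s yS Hs.
by rewrite -[y in (_ <= y)%O](nth_index x0 yS) (lt_sorted_leq_nth x0 Hs) ?inE ?index_mem.
Qed.

Lemma top_max (U : seq X) (x0 y : X) : max_chain U -> (nth x0 U (size U).-1 < y)%O -> False.
Proof.
move=> [HU Hmax] Hl.
have Ht : is_chain (rcons U y).
  move: HU Hl; rewrite nth_last /is_chain; case: U Hmax => [|u p] //= _ HU Hl.
  by rewrite rcons_path HU.
have yU : y \in U.
  apply: (Hmax _ Ht); last by rewrite mem_rcons inE eqxx.
  by move=> x xU; rewrite mem_rcons inE xU orbT.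
by have := le_lt_trans (le_last x0 HU yU) Hl; rewrite ltxx.
Qed.

Lemma bot_max (U : seq X) (x0 y : X) : max_chain U -> (y < nth x0 U 0)%O -> False.
Proof.
move=> [HU Hmax] Hl.
have Ht : is_chain (y :: U).
  move: HU Hl; rewrite /is_chain; case: U Hmax => [|u p] //= _ HU Hl.
  by rewrite Hl HU.
have yU : y \in U.
  apply: (Hmax _ Ht); last by rewrite inE eqxx.
  by move=> x xU; rewrite inE xU orbT.
by have := lt_le_trans Hl (le_head x0 HU yU); rewrite ltxx.
Qed.


Lemma no_mix theta C D (U : (size C).-tuple X) (V : (size D).-tuple X) i j x0 :
  in_M theta -> max_chain C -> max_chain D ->
  (0 < i)%N -> (i.+1 < size C)%N -> (0 < j)%N -> (j.+1 < size D)%N ->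
  nth x0 C i = nth x0 D j -> incr_with theta U -> decr_with theta V -> False.
Proof.
move=> Hm [HC _] [HD _] i0 iC j0 jD eqz.
have uC := lt_sorted_uniq HC; have uD := lt_sorted_uniq HD.
have f1 : (0 < size C)%N by lia.
have f2 : (i < size C)%N by lia.
have f3 : (i < (size C).-1)%N by lia.
have f4 : ((size C).-1 < size C)%N by lia.
have g1 : (0 < size D)%N by lia.
have g2 : (j < size D)%N by lia.
have g3 : (j < (size D).-1)%N by lia.
have g4 : ((size D).-1 < size D)%N by lia.
have h1 : (0 < size D - 1)%N by lia.
have h2 : (size D - 1 < size D)%N by lia.
have h3 : (0 < size D - j.+1)%N by lia.
have h4 : (size D - j.+1 < size D - 1)%N by lia.
have h5 : (0 < (size C).-1)%N by lia.
have g5 : (0 < (size D).-1)%N by lia.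
have h7 : (0 < size C - 1)%N by lia.
have h8 : (size C - 1 < size C)%N by lia.
have h6 : (size D - j.+1 < size D)%N by lia.
set z := nth x0 C i.
set a := nth x0 C 0; set c := nth x0 C (size C).-1.
set a' := nth x0 D 0; set c' := nth x0 D (size D).-1.
have az : (a < z)%O by apply: nth_lt.
have zc : (z < c)%O by apply: nth_lt.
have a'z : (a' < z)%O by rewrite /z eqz; apply: nth_lt.
have zc' : (z < c')%O by rewrite /z eqz; apply: nth_lt.
have aC : a \in C by apply: mem_nth.
have zC : z \in C by apply: mem_nth.
have cC : c \in C by apply: mem_nth.
have a'D : a' \in D by apply: mem_nth.
have zD : z \in D by rewrite /z eqz; apply: mem_nth.
have c'D : c' \in D by apply: mem_nth.
have iaC : index a C = 0%N by rewrite index_uniq.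
have izC : index z C = i by rewrite index_uniq.
have icC : index c C = (size C).-1 by rewrite index_uniq.
have ia'D : index a' D = 0%N by rewrite index_uniq.
have izD : index z D = j by rewrite /z eqz index_uniq.
have ic'D : index c' D = (size D).-1 by rewrite index_uniq.
pose bAZ : Bt (X:=X) := exist _ (a, z) az.
pose bZC : Bt (X:=X) := exist _ (z, c) zc.
pose bA'Z : Bt (X:=X) := exist _ (a', z) a'z.
pose bZC' : Bt (X:=X) := exist _ (z, c') zc'.
have T1 := triple (b1 := bAZ) (b2 := bZC') Hm az zc' erefl erefl.
have T2 := triple (b1 := bA'Z) (b2 := bZC) Hm a'z zc erefl erefl.
move=> HU HV.
have e1 := incr_img x0 HU HC aC zC az (erefl : val bAZ = (a, z)).
have e2 := incr_img x0 HU HC zC cC zc (erefl : val bZC = (z, c)).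
have e3 := decr_img x0 HV HD a'D zD a'z (erefl : val bA'Z = (a', z)).
have e4 := decr_img x0 HV HD zD c'D zc' (erefl : val bZC' = (z, c')).
rewrite iaC izC icC in e1 e2; rewrite ia'D izD ic'D in e3 e4.
rewrite e1 e4 /= in T1; rewrite e2 e3 /= in T2.
rewrite prednK // subnn in T1.
have HUc := HU.1; have HVc := HV.1.
have HVs := HVc.1; have HUs := HUc.1.
have sV := size_tuple V; have sU := size_tuple U.
case: T1 => T1; case: T2 => T2.
- have : (nth x0 V 0 < nth x0 V (size D - 1))%O by apply: nth_lt; rewrite ?sV.
  by rewrite -T1 T2 ltxx.
- apply: (top_max (x0:=x0) (y := nth x0 V (size D - 1)) HUc); rewrite sU T2.
  by apply: nth_lt; rewrite ?sV.
- apply: (bot_max (x0:=x0) (y := nth x0 V 0) HUc); rewrite -T1.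
  by apply: nth_lt; rewrite ?sV.
- have : (nth x0 U 0 < nth x0 U (size C).-1)%O by apply: nth_lt; rewrite ?sU.
  by rewrite -T1 -T2 ltxx.
Qed.


Lemma same_incr theta C D (U : (size C).-tuple X) (V : (size D).-tuple X) i j x0 :
  in_M theta -> max_chain C -> max_chain D ->
  (0 < i)%N -> (i.+1 < size C)%N -> (0 < j)%N -> (j.+1 < size D)%N ->
  nth x0 C i = nth x0 D j -> incr_with theta U -> incr_with theta V ->
  nth x0 U i = nth x0 V j.
Proof.
move=> Hm [HC _] [HD _] i0 iC j0 jD eqz.
have uC := lt_sorted_uniq HC; have uD := lt_sorted_uniq HD.
have f1 : (0 < size C)%N by lia.
have f2 : (i < size C)%N by lia.
have f3 : (i < (size C).-1)%N by lia.
have f4 : ((size C).-1 < size C)%N by lia.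
have g1 : (0 < size D)%N by lia.
have g2 : (j < size D)%N by lia.
have g3 : (j < (size D).-1)%N by lia.
have g4 : ((size D).-1 < size D)%N by lia.
have h1 : (0 < size D - 1)%N by lia.
have h2 : (size D - 1 < size D)%N by lia.
have h3 : (0 < size D - j.+1)%N by lia.
have h4 : (size D - j.+1 < size D - 1)%N by lia.
have h5 : (0 < (size C).-1)%N by lia.
have g5 : (0 < (size D).-1)%N by lia.
have h7 : (0 < size C - 1)%N by lia.
have h8 : (size C - 1 < size C)%N by lia.
have h6 : (size D - j.+1 < size D)%N by lia.
set z := nth x0 C i.
set a := nth x0 C 0; set c := nth x0 C (size C).-1.
set a' := nth x0 D 0; set c' := nth x0 D (size D).-1.
have az : (a < z)%O by apply: nth_lt.
have zc : (z < c)%O by apply: nth_lt.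
have a'z : (a' < z)%O by rewrite /z eqz; apply: nth_lt.
have zc' : (z < c')%O by rewrite /z eqz; apply: nth_lt.
have aC : a \in C by apply: mem_nth.
have zC : z \in C by apply: mem_nth.
have cC : c \in C by apply: mem_nth.
have a'D : a' \in D by apply: mem_nth.
have zD : z \in D by rewrite /z eqz; apply: mem_nth.
have c'D : c' \in D by apply: mem_nth.
have iaC : index a C = 0%N by rewrite index_uniq.
have izC : index z C = i by rewrite index_uniq.
have icC : index c C = (size C).-1 by rewrite index_uniq.
have ia'D : index a' D = 0%N by rewrite index_uniq.
have izD : index z D = j by rewrite /z eqz index_uniq.
have ic'D : index c' D = (size D).-1 by rewrite index_uniq.
pose bAZ : Bt (X:=X) := exist _ (a, z) az.
pose bZC : Bt (X:=X) := exist _ (z, c) zc.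
pose bA'Z : Bt (X:=X) := exist _ (a', z) a'z.
pose bZC' : Bt (X:=X) := exist _ (z, c') zc'.
have T1 := triple (b1 := bAZ) (b2 := bZC') Hm az zc' erefl erefl.
have T2 := triple (b1 := bA'Z) (b2 := bZC) Hm a'z zc erefl erefl.
move=> HU HV.
have e1 := incr_img x0 HU HC aC zC az (erefl : val bAZ = (a, z)).
have e2 := incr_img x0 HU HC zC cC zc (erefl : val bZC = (z, c)).
have e3 := incr_img x0 HV HD a'D zD a'z (erefl : val bA'Z = (a', z)).
have e4 := incr_img x0 HV HD zD c'D zc' (erefl : val bZC' = (z, c')).
rewrite iaC izC icC in e1 e2; rewrite ia'D izD ic'D in e3 e4.
rewrite e1 e4 /= in T1; rewrite e2 e3 /= in T2.
have HUc := HU.1; have HVc := HV.1.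
have HVs := HVc.1; have HUs := HUc.1.
have sV := size_tuple V; have sU := size_tuple U.
case: T1 => [//|T1]; case: T2 => [//|T2].
have : (nth x0 U 0 < nth x0 U (size C).-1)%O by apply: nth_lt; rewrite ?sU.
have : (nth x0 V 0 < nth x0 V (size D).-1)%O by apply: nth_lt; rewrite ?sV.
rewrite -T1 -T2 => H1 H2.
by have := lt_trans H1 H2; rewrite ltxx.
Qed.

Lemma same_decr theta C D (U : (size C).-tuple X) (V : (size D).-tuple X) i j x0 :
  in_M theta -> max_chain C -> max_chain D ->
  (0 < i)%N -> (i.+1 < size C)%N -> (0 < j)%N -> (j.+1 < size D)%N ->
  nth x0 C i = nth x0 D j -> decr_with theta U -> decr_with theta V ->
  nth x0 U (size C - i.+1) = nth x0 V (size D - j.+1).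
Proof.
move=> Hm [HC _] [HD _] i0 iC j0 jD eqz.
have uC := lt_sorted_uniq HC; have uD := lt_sorted_uniq HD.
have f1 : (0 < size C)%N by lia.
have f2 : (i < size C)%N by lia.
have f3 : (i < (size C).-1)%N by lia.
have f4 : ((size C).-1 < size C)%N by lia.
have g1 : (0 < size D)%N by lia.
have g2 : (j < size D)%N by lia.
have g3 : (j < (size D).-1)%N by lia.
have g4 : ((size D).-1 < size D)%N by lia.
have h1 : (0 < size D - 1)%N by lia.
have h2 : (size D - 1 < size D)%N by lia.
have h3 : (0 < size D - j.+1)%N by lia.
have h4 : (size D - j.+1 < size D - 1)%N by lia.
have h5 : (0 < (size C).-1)%N by lia.
have g5 : (0 < (size D).-1)%N by lia.
have h7 : (0 < size C - 1)%N by lia.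
have h8 : (size C - 1 < size C)%N by lia.
have h6 : (size D - j.+1 < size D)%N by lia.
set z := nth x0 C i.
set a := nth x0 C 0; set c := nth x0 C (size C).-1.
set a' := nth x0 D 0; set c' := nth x0 D (size D).-1.
have az : (a < z)%O by apply: nth_lt.
have zc : (z < c)%O by apply: nth_lt.
have a'z : (a' < z)%O by rewrite /z eqz; apply: nth_lt.
have zc' : (z < c')%O by rewrite /z eqz; apply: nth_lt.
have aC : a \in C by apply: mem_nth.
have zC : z \in C by apply: mem_nth.
have cC : c \in C by apply: mem_nth.
have a'D : a' \in D by apply: mem_nth.
have zD : z \in D by rewrite /z eqz; apply: mem_nth.
have c'D : c' \in D by apply: mem_nth.
have iaC : index a C = 0%N by rewrite index_uniq.
have izC : index z C = i by rewrite index_uniq.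
have icC : index c C = (size C).-1 by rewrite index_uniq.
have ia'D : index a' D = 0%N by rewrite index_uniq.
have izD : index z D = j by rewrite /z eqz index_uniq.
have ic'D : index c' D = (size D).-1 by rewrite index_uniq.
pose bAZ : Bt (X:=X) := exist _ (a, z) az.
pose bZC : Bt (X:=X) := exist _ (z, c) zc.
pose bA'Z : Bt (X:=X) := exist _ (a', z) a'z.
pose bZC' : Bt (X:=X) := exist _ (z, c') zc'.
have T1 := triple (b1 := bAZ) (b2 := bZC') Hm az zc' erefl erefl.
have T2 := triple (b1 := bA'Z) (b2 := bZC) Hm a'z zc erefl erefl.
move=> HU HV.
have e1 := decr_img x0 HU HC aC zC az (erefl : val bAZ = (a, z)).
have e2 := decr_img x0 HU HC zC cC zc (erefl : val bZC = (z, c)).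
have e3 := decr_img x0 HV HD a'D zD a'z (erefl : val bA'Z = (a', z)).
have e4 := decr_img x0 HV HD zD c'D zc' (erefl : val bZC' = (z, c')).
rewrite iaC izC icC in e1 e2; rewrite ia'D izD ic'D in e3 e4.
rewrite e1 e4 /= in T1; rewrite e2 e3 /= in T2.
rewrite prednK // subnn in T1; rewrite prednK // subnn in T2.
have HUc := HU.1; have HVc := HV.1.
have HVs := HVc.1; have HUs := HUc.1.
have sV := size_tuple V; have sU := size_tuple U.
case: T1 => [T1|]; last by move=> ->.
case: T2 => [T2|]; last by move=> ->.
have : (nth x0 U 0 < nth x0 U (size C - 1))%O by apply: nth_lt; rewrite ?sU.
have : (nth x0 V 0 < nth x0 V (size D - 1))%O by apply: nth_lt; rewrite ?sV.
rewrite -T1 -T2 => H1 H2.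
by have := lt_trans H1 H2; rewrite ltxx.
Qed.

End H.

Theorem lemma3p5 (disp : Order.disp_t) (X : finPOrderType disp)
  (theta : @Bt disp X -> @Bt disp X) (C D : seq X)
  (i : 'I_(size C)) (j : 'I_(size D)) :
  poset_connected (X := X) -> in_M theta ->
  max_chain C -> max_chain D ->
  (0 < i)%N -> (i.+1 < size C)%N -> (0 < j)%N -> (j.+1 < size D)%N ->
  tnth (in_tuple C) i = tnth (in_tuple D) j ->
  (increasing_on theta C ->
     increasing_on theta D /\
     forall (U : (size C).-tuple X) (V : (size D).-tuple X),
       incr_with theta U -> incr_with theta V -> tnth U i = tnth V j) /\
  (decreasing_on theta C ->
     decreasing_on theta D /\
     forall (U : (size C).-tuple X) (V : (size D).-tuple X),
       decr_with theta U -> decr_with theta V ->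
       tnth U (rev_ord i) = tnth V (rev_ord j)).
Proof.
move=> _ Hm HC HD i0 iC j0 jD eqz.
pose x0 := tnth (in_tuple C) i.
have eqn : nth x0 C i = nth x0 D j by move: eqz; rewrite !(tnth_nth x0).
split.
- move=> [U HU]; split.
    case: (Hm.2 D HD) => [//|[V HV]].
    by exfalso; apply: (no_mix Hm HC HD i0 iC j0 jD eqn HU HV).
  move=> U' V' HU' HV'; rewrite !(tnth_nth x0).
  exact: (same_incr Hm HC HD i0 iC j0 jD eqn HU' HV').
- move=> [U HU]; split.
    case: (Hm.2 D HD) => [[V HV]|//].
    by exfalso; apply: (no_mix Hm HD HC j0 jD i0 iC (esym eqn) HV HU).
  move=> U' V' HU' HV'; rewrite !(tnth_nth x0) /=.
  exact: (same_decr Hm HC HD i0 iC j0 jD eqn HU' HV').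
Qed.
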